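(* Let $\mathcal{B}$ be a real uniform Banach space and $\Omega:\mathcal{B}\to\mathbb{R}$ admissible. Let $m\in\mathbb{N}$ and data $(x_i,y_i)_{i=1}^m\subset\mathcal{B}\times\mathbb{R}$ be such that the constraints $[f,x_i]=y_i$ ($i=1,\dots,m$) can be satisfied. Let $f_0\in\mathcal{B}$ be such that $f_0^*=\sum_{i=1}^m c_ix_i^*$ for some $c_1,\dots,c_m\in\mathbb{R}$. Then $f_0$ is a solution of the regularised interpolation problem $\min\{\Omega(f): f\in\mathcal{B},\ [f,x_i]=y_i\ \forall i\}$ if and only if $f_0$ is a solution of the minimal norm interpolation problem $\min\{\|f\|: f\in\mathcal{B},\ [f,x_i]=y_i\ \forall i\}$.
   Context: A real Banach space $\mathcal{B}$ is called uniform if it is uniformly convex and uniformly smooth (equivalently, its norm is uniformly Fréchet differentiable). On such a space there is a unique semi-inner product inducing the norm, i.e. a unique map $[\cdot,\cdot]:\mathcal{B}\times\mathcal{B}\to\mathbb{R}$ that is linear in the first argument, satisfies $[x,x]=\|x\|^2$, $|[x,y]|^2\le[x,x][y,y]$ and $[x,\lambda y]=\lambda[x,y]$ for $\lambda\in\mathbb{R}$; it is given by $[y,x]=\|x\|\lim_{t\to0}\frac{\|x+ty\|-\|x\|}{t}$ for $x\neq0$ (and $[y,0]=0$). The duality map $x\mapsto x^*$, $x^*(y)=[y,x]$, is a (nonlinear in general, but positively and negatively homogeneous) isometric bijection $\mathcal{B}\to\mathcal{B}^*$. Given $m\in\mathbb{N}$ and data $(x_i,y_i)\in\mathcal{B}\times\mathbb{R}$,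 $i=1,\dots,m$, the regularised interpolation problem is $\min\{\Omega(f): f\in\mathcal{B},\ [f,x_i]=y_i\ \forall i=1,\dots,m\}$. A function $\Omega:\mathcal{B}\to\mathbb{R}$ is called admissible if for every $m\in\mathbb{N}$ and every data $(x_i,y_i)_{i=1}^m\subset\mathcal{B}\times\mathbb{R}$ for which the constraints $[f,x_i]=y_i$ can be satisfied, the regularised interpolation problem has a minimiser $f_0$ whose dual element satisfies $f_0^*=\sum_{i=1}^m c_i x_i^*$ for some $c_i\in\mathbb{R}$. *)

(* Defs.v *)
From Stdlib Require Import Reals Lra.
Open Scope R_scope.

Record NormedSpace := {
  carrier :> Type;
  vzero : carrier;
  vadd : carrier -> carrier -> carrier;
  vopp : carrier -> carrier;
  vscal : R -> carrier -> carrier;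
  vnorm : carrier -> R;
  vaddA : forall x y z, vadd x (vadd y z) = vadd (vadd x y) z;
  vaddC : forall x y, vadd x y = vadd y x;
  vadd0 : forall x, vadd x vzero = x;
  vaddN : forall x, vadd x (vopp x) = vzero;
  vscalA : forall a b x, vscal a (vscal b x) = vscal (a * b) x;
  vscal1 : forall x, vscal 1 x = x;
  vscalDv : forall a x y, vscal a (vadd x y) = vadd (vscal a x) (vscal a y);
  vscalDs : forall a b x, vscal (a + b) x = vadd (vscal a x) (vscal b x);
  vnorm_eq0 : forall x, vnorm x = 0 -> x = vzero;
  vnorm_scal : forall a x, vnorm (vscal a x) = Rabs a * vnorm x;
  vnorm_triangle : forall x y, vnorm (vadd x y) <= vnorm x + vnorm y
}.

Arguments vzero {n}.
Arguments vadd {n}.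
Arguments vopp {n}.
Arguments vscal {n}.
Arguments vnorm {n}.

Definition vsub {B : NormedSpace} (x y : B) : B := vadd x (vopp y).

Definition complete (B : NormedSpace) : Prop :=
  forall u : nat -> B,
    (forall eps, 0 < eps -> exists N, forall n k, (N <= n)%nat -> (N <= k)%nat ->
        vnorm (vsub (u n) (u k)) < eps) ->
    exists l : B, forall eps, 0 < eps -> exists N, forall n, (N <= n)%nat ->
        vnorm (vsub (u n) l) < eps.

Definition uniformly_convex (B : NormedSpace) : Prop :=
  forall eps, 0 < eps <= 2 -> exists delta, 0 < delta /\
    forall x y : B, vnorm x <= 1 -> vnorm y <= 1 -> eps <= vnorm (vsub x y) ->
      vnorm (vscal (1/2) (vadd x y)) <= 1 - delta.

(* Uniform smoothness: the modulus of smoothness rho(t) satisfies rho(t)/t -> 0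
   as t -> 0+, where rho(t) = sup_{|x|=|y|=1} (|x+ty|+|x-ty|)/2 - 1. *)
Definition uniformly_smooth (B : NormedSpace) : Prop :=
  forall eps, 0 < eps -> exists tau, 0 < tau /\
    forall t, 0 < t < tau -> forall x y : B, vnorm x = 1 -> vnorm y = 1 ->
      (vnorm (vadd x (vscal t y)) + vnorm (vsub x (vscal t y))) / 2 - 1 <= eps * t.

Definition uniform_Banach (B : NormedSpace) : Prop :=
  complete B /\ uniformly_convex B /\ uniformly_smooth B.

Definition is_sip (B : NormedSpace) (sip : B -> B -> R) : Prop :=
  (forall y : B, sip y vzero = 0) /\
  (forall x y : B, x <> vzero ->
     derivable_pt_lim (fun t => vnorm (vadd x (vscal t y))) 0 (sip y x / vnorm x)).

Fixpoint rsum (m : nat) (f : nat -> R) : R :=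
  match m with
  | O => 0
  | S k => rsum k f + f k
  end.

Definition interpolates {B : NormedSpace} (sip : B -> B -> R) (m : nat)
  (x : nat -> B) (y : nat -> R) (f : B) : Prop :=
  forall i, (i < m)%nat -> sip f (x i) = y i.

Definition is_minimiser {B : NormedSpace} (sip : B -> B -> R) (J : B -> R)
  (m : nat) (x : nat -> B) (y : nat -> R) (f : B) : Prop :=
  interpolates sip m x y f /\
  forall g, interpolates sip m x y g -> J f <= J g.

(* f^* = sum_{i<m} c_i x_i^*, where z^*(w) = [w, z]. *)
Definition dual_in_span {B : NormedSpace} (sip : B -> B -> R) (m : nat)
  (x : nat -> B) (f : B) : Prop :=
  exists c : nat -> R, forall w : B, sip w f = rsum m (fun i => c i * sip w (x i)).

Definition admissible {B : NormedSpace} (sip : B -> B -> R) (Omega : B -> R) : Prop :=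
  forall (m : nat) (x : nat -> B) (y : nat -> R),
    (1 <= m)%nat ->
    (exists f, interpolates sip m x y f) ->
    exists f0, is_minimiser sip Omega m x y f0 /\ dual_in_span sip m x f0.

(* Main.v *)
Require Import Defs.
From Stdlib Require Import Reals Lra Lia.
Open Scope R_scope.

Section S.
Variable B : NormedSpace.

Lemma deriv_le (h : R -> R) l M :
  derivable_pt_lim h 0 l ->
  (forall t, 0 < t <= 1 -> (h t - h 0) / t <= M) -> l <= M.
Proof.
  intros D H. destruct (Rle_dec l M) as [|n]; [auto|].
  exfalso. destruct (D (l - M)) as [d Hd]; [lra|].
  set (t := Rmin (d/2) 1).
  assert (Ht : 0 < t <= 1).
  { unfold t. pose proof (cond_pos d). split. apply Rmin_glb_lt; lra. apply Rmin_r. }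
  assert (Hta : Rabs t < d).
  { rewrite Rabs_right by lra. unfold t. pose proof (Rmin_l (d/2) 1). pose proof (cond_pos d); lra. }
  specialize (Hd t ltac:(lra) Hta). rewrite Rplus_0_l in Hd.
  specialize (H t Ht). apply Rabs_def2 in Hd. lra.
Qed.

Lemma deriv_ge (h : R -> R) l M :
  derivable_pt_lim h 0 l ->
  (forall t, 0 < t <= 1 -> M <= (h t - h 0) / t) -> M <= l.
Proof.
  intros D H. destruct (Rle_dec M l) as [|n]; [auto|].
  exfalso. destruct (D (M - l)) as [d Hd]; [lra|].
  set (t := Rmin (d/2) 1).
  assert (Ht : 0 < t <= 1).
  { unfold t. pose proof (cond_pos d). split. apply Rmin_glb_lt; lra. apply Rmin_r. }
  assert (Hta : Rabs t < d).
  { rewrite Rabs_right by lra. unfold t. pose proof (Rmin_l (d/2) 1). pose proof (cond_pos d); lra. }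
  specialize (Hd t ltac:(lra) Hta). rewrite Rplus_0_l in Hd.
  specialize (H t Ht). apply Rabs_def2 in Hd. lra.
Qed.

Lemma scal0 (x : B) : vscal 0 x = vzero.
Proof.
  set (a := vscal 0 x).
  assert (E : a = vadd a a). { unfold a. rewrite <- vscalDs. f_equal. ring. }
  rewrite <- (vaddN _ a). rewrite E at 2.
  rewrite <- vaddA, vaddN, vadd0. reflexivity.
Qed.

Lemma norm0 : vnorm (@vzero B) = 0.
Proof. rewrite <- (scal0 vzero), vnorm_scal, Rabs_R0. ring. Qed.

Lemma norm_nonneg (x : B) : 0 <= vnorm x.
Proof.
  assert (E : vscal 0 x = vadd (vscal 1 x) (vscal (-1) x)).
  { rewrite <- vscalDs. f_equal. ring. }
  pose proof (vnorm_triangle _ (vscal 1 x) (vscal (-1) x)).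
  rewrite <- E, !vnorm_scal, Rabs_R0, Rabs_R1 in H.
  replace (Rabs (-1)) with 1 in H by (rewrite Rabs_left; lra). lra.
Qed.

Lemma add0l (x : B) : vadd vzero x = x.
Proof. rewrite vaddC. apply vadd0. Qed.

Lemma sub_eq (u v : B) : vsub u v = vzero -> u = v.
Proof.
  unfold vsub. intro H.
  rewrite <- (vadd0 _ u), <- (vaddN _ v), (vaddC _ v (vopp v)), vaddA, H, add0l.
  reflexivity.
Qed.

Variable sip : B -> B -> R.
Hypothesis Hsip : is_sip B sip.

Lemma div_le a t M : 0 < t -> a <= M * t -> a / t <= M.
Proof.
  intros Ht H. unfold Rdiv. replace M with ((M*t) * /t) by (field; lra).
  apply Rmult_le_compat_r; [left; apply Rinv_0_lt_compat; lra | lra].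
Qed.

Lemma le_div a t M : 0 < t -> M * t <= a -> M <= a / t.
Proof.
  intros Ht H. unfold Rdiv. replace M with ((M*t) * /t) by (field; lra).
  apply Rmult_le_compat_r; [left; apply Rinv_0_lt_compat; lra | lra].
Qed.

Lemma norm_pos (f : B) : f <> vzero -> 0 < vnorm f.
Proof.
  intro H. destruct (norm_nonneg f) as [|E]; auto. exfalso; apply H, vnorm_eq0; auto.
Qed.

Lemma addscal0 (f g : B) : vadd f (vscal 0 g) = f.
Proof. rewrite scal0. apply vadd0. Qed.

Lemma sip_self (f : B) : sip f f = vnorm f * vnorm f.
Proof.
  destruct (Classical_Prop.classic (f = vzero)) as [->|Hf].
  { rewrite (proj1 Hsip), norm0. ring. }
  pose proof (norm_pos f Hf) as Hn.
  pose proof (proj2 Hsip f f Hf) as D.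
  assert (K : forall t, 0 < t <= 1 ->
     (vnorm (vadd f (vscal t f)) - vnorm (vadd f (vscal 0 f))) / t = vnorm f).
  { intros t Ht. rewrite addscal0.
    rewrite <- (vscal1 _ f) at 1. rewrite <- vscalDs, vnorm_scal, Rabs_right by lra.
    field. lra. }
  pose proof (deriv_le _ _ (vnorm f) D ltac:(intros t Ht; cbv beta; rewrite (K t Ht); lra)).
  pose proof (deriv_ge _ _ (vnorm f) D ltac:(intros t Ht; cbv beta; rewrite (K t Ht); lra)).
  assert (E : sip f f / vnorm f = vnorm f) by lra.
  replace (sip f f) with (sip f f / vnorm f * vnorm f) by (field; lra). rewrite E; ring.
Qed.

Lemma sip_cs (g f : B) : sip g f <= vnorm g * vnorm f.
Proof.
  destruct (Classical_Prop.classic (f = vzero)) as [->|Hf].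
  { rewrite (proj1 Hsip), norm0. lra. }
  pose proof (norm_pos f Hf) as Hn.
  pose proof (proj2 Hsip f g Hf) as D.
  assert (L : sip g f / vnorm f <= vnorm g).
  { apply (deriv_le _ _ _ D). intros t Ht. rewrite addscal0. apply div_le; [lra|].
    pose proof (vnorm_triangle _ f (vscal t g)). rewrite vnorm_scal, Rabs_right in H by lra.
    lra. }
  replace (sip g f) with (sip g f / vnorm f * vnorm f) by (field; lra).
  apply Rmult_le_compat_r; lra.
Qed.

Lemma sip_conv (f1 f0 : B) : f0 <> vzero ->
  sip f1 f0 / vnorm f0 <= vnorm (vadd f0 f1) - vnorm f0.
Proof.
  intro Hf. pose proof (norm_pos f0 Hf) as Hn.
  pose proof (proj2 Hsip f0 f1 Hf) as D.
  apply (deriv_le _ _ _ D). intros t Ht. rewrite addscal0. apply div_le; [lra|].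
  assert (E : vadd f0 (vscal t f1) = vadd (vscal (1-t) f0) (vscal t (vadd f0 f1))).
  { rewrite vscalDv, vaddA, <- vscalDs. replace (1 - t + t) with 1 by ring.
    rewrite vscal1. reflexivity. }
  rewrite E. pose proof (vnorm_triangle _ (vscal (1-t) f0) (vscal t (vadd f0 f1))).
  rewrite !vnorm_scal, !Rabs_right in H by lra. lra.
Qed.

Lemma rsum_ext m (f g : nat -> R) : (forall i, (i < m)%nat -> f i = g i) -> rsum m f = rsum m g.
Proof.
  induction m; intros H; simpl; auto.
  rewrite IHm by (intros; apply H; lia). rewrite H by lia. reflexivity.
Qed.

Lemma sip_span m x y (f0 g : B) : interpolates sip m x y f0 -> interpolates sip m x y g ->
  dual_in_span sip m x f0 -> sip g f0 = vnorm f0 * vnorm f0.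
Proof.
  intros H0 Hg [c Hc]. rewrite <- sip_self, !Hc. apply rsum_ext. intros i Hi.
  rewrite H0, Hg by auto. reflexivity.
Qed.

Lemma minnorm m x y (f0 : B) : interpolates sip m x y f0 ->
  dual_in_span sip m x f0 -> is_minimiser sip vnorm m x y f0.
Proof.
  intros H0 Hd. split; auto. intros g Hg.
  pose proof (sip_span m x y f0 g H0 Hg Hd) as E. pose proof (sip_cs g f0).
  pose proof (norm_nonneg f0). pose proof (norm_nonneg g).
  destruct (Rle_dec (vnorm f0) (vnorm g)); auto. nra.
Qed.

Lemma unique m x y (f0 f1 : B) : uniformly_convex B ->
  interpolates sip m x y f0 -> interpolates sip m x y f1 ->
  dual_in_span sip m x f0 -> vnorm f0 = vnorm f1 -> f0 = f1.
Proof.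
  intros UC H0 H1 Hd En.
  pose proof (sip_span m x y f0 f1 H0 H1 Hd) as E.
  destruct (Classical_Prop.classic (f0 = vzero)) as [Z|Hf].
  { subst f0. symmetry. apply vnorm_eq0. rewrite <- En. apply norm0. }
  pose proof (norm_pos f0 Hf) as Hn. set (r := vnorm f0) in *.
  pose proof (sip_conv f1 f0 Hf) as C. fold r in C. rewrite E in C.
  replace (r * r / r) with r in C by (field; lra).
  pose proof (vnorm_triangle _ f0 f1) as T. fold r in T.
  destruct (Classical_Prop.classic (f0 = f1)) as [|Hne]; auto. exfalso.
  set (u := vscal (1/r) f0). set (v := vscal (1/r) f1).
  assert (Nu : vnorm u = 1). { unfold u. rewrite vnorm_scal, Rabs_right. fold r. field. lra.
    apply Rle_ge; left; apply Rdiv_lt_0_compat; lra. }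
  assert (Nv : vnorm v = 1). { unfold v. rewrite vnorm_scal, Rabs_right, <- En. fold r. field. lra.
    apply Rle_ge; left; apply Rdiv_lt_0_compat; lra. }
  assert (Duv : 0 < vnorm (vsub u v)).
  { apply norm_pos. intro Z. apply sub_eq in Z. apply Hne.
    rewrite <- (vscal1 _ f0), <- (vscal1 _ f1). replace 1 with (r * (1/r)) by (field; lra).
    rewrite <- !vscalA. fold u v. rewrite Z. reflexivity. }
  set (e := Rmin (vnorm (vsub u v)) 2).
  assert (He : 0 < e <= 2). { unfold e. split. apply Rmin_glb_lt; lra. apply Rmin_r. }
  destruct (UC e He) as [dl [Hdl K]].
  specialize (K u v ltac:(lra) ltac:(lra) (Rmin_l _ _)).
  assert (Ew : vscal (1/2) (vadd u v) = vscal (1/2 * (1/r)) (vadd f0 f1)).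
  { unfold u, v. rewrite <- vscalDv, vscalA. reflexivity. }
  rewrite Ew, vnorm_scal, Rabs_right in K.
  2: { apply Rle_ge; left. apply Rmult_lt_0_compat; [lra|apply Rdiv_lt_0_compat; lra]. }
  assert (vnorm (vadd f0 f1) = 2 * r) by lra. rewrite H in K.
  replace (1/2 * (1/r) * (2*r)) with 1 in K by (field; lra). lra.
Qed.

End S.

Theorem theorem4p1 (B : NormedSpace) (sip : B -> B -> R) (Omega : B -> R)
  (HB : uniform_Banach B) (Hsip : is_sip B sip) (Hadm : admissible sip Omega)
  (m : nat) (x : nat -> B) (y : nat -> R) (Hm : (1 <= m)%nat)
  (Hfeas : exists f, interpolates sip m x y f)
  (f0 : B) (Hf0 : dual_in_span sip m x f0) :
  is_minimiser sip Omega m x y f0 <-> is_minimiser sip vnorm m x y f0.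
Proof.
  split.
  - intros [H0 _]. apply minnorm; auto.
  - intros [H0 Hmin].
    destruct (Hadm m x y Hm Hfeas) as [f1 [[H1 Hom] Hd1]].
    destruct (minnorm B sip Hsip m x y f1 H1 Hd1) as [_ Hmin1].
    assert (f0 = f1).
    { apply (unique B sip Hsip m x y); auto. apply (proj1 (proj2 HB)).
      apply Rle_antisym; auto. }
    subst f1. split; auto.
Qed.
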